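(* Let $\mathbf S=\operatorname{diag}(\lambda_i)_{i=1}^d$, $\mathbf M=\operatorname{diag}(m_i)_{i=1}^d$ with $\lambda_i,m_i>0$, $\mathbf R=\operatorname{diag}(r_i)_{i=1}^d$ with $r_i\ge0$, $\sigma>0$, $n\ge1$, and set $\mathbf R'=\mathbf M^{-1/2}\mathbf R\mathbf M^{-1/2}$, $\mathbf S'=\mathbf M^{-1/2}\mathbf S\mathbf M^{-1/2}$. For $\tau\ge0$ let $\mathbb K_\tau=\{k\in[d]:r_k/m_k>\tau^2\}$. Then $$\inf_{\mathbf A\in\mathbb R^{d\times d}}\frac1{\pi^2}\|(\mathbf I-\mathbf A)^\top\mathbf R'(\mathbf I-\mathbf A)\|+\frac{\sigma^2}{n}\langle\mathbf R',\mathbf A(\mathbf S')^{-1}\mathbf A^\top\rangle=\inf_{\tau\ge0}\Big[\frac{\tau^2}{\pi^2}+\sum_{i\in\mathbb K_\tau}\Big(1-\tau\sqrt{\tfrac{m_i}{r_i}}\Big)^2\frac{\sigma^2r_i}{n\lambda_i}\Big]\ \ge\ \frac14\inf_{\tau\ge0}\Big[\frac{\tau^2}{\pi^2}+\sum_{i\in\mathbb K_\tau}\frac{\sigma^2r_i}{n\lambda_i}\Big].$$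
   Context: $\|\cdot\|$ is the spectral norm and $\langle\mathbf A,\mathbf B\rangle=\operatorname{tr}(\mathbf A^\top\mathbf B)$; $[d]=\{1,\dots,d\}$. *)

(* Defs.v *)
From HB Require Import structures.
From mathcomp Require Import all_boot all_order all_algebra.
From mathcomp Require Import all_classical all_reals all_analysis.
Set Implicit Arguments. Unset Strict Implicit. Unset Printing Implicit Defensive.
Import Order.TTheory GRing.Theory Num.Theory.
Local Open Scope classical_set_scope.
Local Open Scope ring_scope.

Definition vnorm (R : realType) (d : nat) (x : 'cV[R]_d) : R :=
  Num.sqrt (\sum_(i < d) x i 0 ^+ 2).

Definition spec_norm (R : realType) (d : nat) (B : 'M[R]_d) : R :=
  sup [set vnorm (B *m x) | x in [set x : 'cV[R]_d | vnorm x <= 1]].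

Definition frob_inner (R : realType) (d : nat) (A B : 'M[R]_d) : R :=
  \tr (A^T *m B).

Definition diagf (R : realType) (d : nat) (v : 'I_d -> R) : 'M[R]_d :=
  diag_mx (\row_i v i).

(* Main.v *)
Require Import Defs.
From HB Require Import structures.
From mathcomp Require Import all_boot all_order all_algebra.
From mathcomp Require Import all_classical all_reals all_analysis.
From mathcomp Require Import ring lra.
Import Order.TTheory GRing.Theory Num.Theory.
Local Open Scope classical_set_scope.
Local Open Scope ring_scope.

Set Implicit Arguments. Unset Strict Implicit. Unset Printing Implicit Defensive.
Section Aux.
Variable R : realType.

Lemma term_le_sum (d : nat) (F : 'I_d -> R) j :
  (forall i, 0 <= F i) -> F j <= \sum_i F i.
Proof. by move=> h; rewrite (bigD1 j) //= lerDl sumr_ge0. Qed.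

Lemma vnorm_ge0 d (x : 'cV[R]_d) : 0 <= vnorm x.
Proof. exact: sqrtr_ge0. Qed.

Lemma vnorm_coord d (x : 'cV[R]_d) j : `|x j 0| <= vnorm x.
Proof.
rewrite /vnorm -sqrtr_sqr ler_sqrt; last by apply: sumr_ge0 => i _; exact: sqr_ge0.
by apply: term_le_sum => i; exact: sqr_ge0.
Qed.

Lemma vnorm_le_sum d (x : 'cV[R]_d) : vnorm x <= \sum_i `|x i 0|.
Proof.
have h0 : 0 <= \sum_i `|x i 0| by apply: sumr_ge0.
rewrite /vnorm -(ger0_norm h0) -sqrtr_sqr ler_sqrt; last exact: sqr_ge0.
rewrite expr2 mulr_sumr; apply: ler_sum => i _.
rewrite expr2; apply: le_trans (ler_norm _) _; rewrite normrM mulrC; apply: ler_wpM2r => //.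
by apply: term_le_sum.
Qed.

Lemma vnorm0 d : vnorm (0 : 'cV[R]_d) = 0.
Proof. rewrite /vnorm big1 ?sqrtr0 // => i _; rewrite mxE expr0n. by []. Qed.

Lemma vnorm_delta d (j : 'I_d) : vnorm (delta_mx j 0 : 'cV[R]_d) = 1.
Proof.
rewrite /vnorm (bigD1 j) //= big1 ?addr0 ?mxE ?eqxx ?expr1n ?sqrtr1 //.
by move=> i hi; rewrite mxE (negbTE hi) expr0n.
Qed.

Definition snset d (B : 'M[R]_d) :=
  [set vnorm (B *m x) | x in [set x : 'cV[R]_d | vnorm x <= 1]].

Arguments snset {d}.
Lemma snset_ub d (B : 'M[R]_d) : has_ubound (snset B).
Proof.
pose K : R := \sum_i \sum_j `|B i j|.
have h : forall x, vnorm x <= 1 -> vnorm (B *m x) <= K.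
  move=> x hx; apply: (le_trans (vnorm_le_sum _)); apply: ler_sum => i _.
  rewrite mxE; apply: le_trans (ler_norm_sum _ _ _) _; apply: ler_sum => j _.
  rewrite normrM -[leRHS]mulr1; apply: ler_wpM2l => //.
  exact: le_trans (vnorm_coord x j) hx.
by exists K => _ [x hx <-]; exact: h.
Qed.

Lemma spec_ge d (B : 'M[R]_d) x : vnorm x <= 1 -> vnorm (B *m x) <= spec_norm B.
Proof. move=> hx; apply: (ub_le_sup (snset_ub B)); by exists x. Qed.

Lemma spec_ge0 d (B : 'M[R]_d) : 0 <= spec_norm B.
Proof.
by have := @spec_ge d B (0 : 'cV_d); rewrite mulmx0 vnorm0 ler01 => /(_ isT).
Qed.

Lemma spec_le d (B : 'M[R]_d) K :
  (forall x, vnorm x <= 1 -> vnorm (B *m x) <= K) -> spec_norm B <= K.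
Proof.
move=> h; apply: ge_sup; first by exists (vnorm (B *m 0)), 0 => //=; rewrite vnorm0 ler01.
by move=> _ [x hx <-]; exact: h.
Qed.


Lemma diagf_mul d (a b : 'I_d -> R) : diagf a *m diagf b = diagf (fun i => a i * b i).
Proof. by rewrite /diagf mulmx_diag; congr diag_mx; apply/rowP => i; rewrite !mxE. Qed.

Lemma diagf_tr d (a : 'I_d -> R) : (diagf a)^T = diagf a.
Proof. by rewrite /diagf tr_diag_mx. Qed.

Lemma diagf1 d : diagf (fun _ : 'I_d => 1 : R) = 1%:M.
Proof. by apply/matrixP => i j; rewrite !mxE. Qed.

Lemma one_sub_diagf d (a : 'I_d -> R) : 1%:M - diagf a = diagf (fun i => 1 - a i).
Proof.
apply/matrixP => i j; rewrite !mxE; case: (i == j) => /=; by rewrite ?mulr1n ?mulr0n ?subr0.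
Qed.

Lemma conj_diag d (m v : 'I_d -> R) : (forall i, 0 < m i) ->
  diagf (fun i => (Num.sqrt (m i))^-1) *m diagf v *m diagf (fun i => (Num.sqrt (m i))^-1)
  = diagf (fun i => v i / m i).
Proof.
move=> hm; rewrite !diagf_mul; congr diagf; apply/funext => i.
have h := sqr_sqrtr (ltW (hm i)).
have hs : Num.sqrt (m i) != 0 by rewrite sqrtr_eq0 -ltNge.
rewrite -{3}h; field; exact: hs.
Qed.

Lemma inv_diagf d (w : 'I_d -> R) : (forall i, w i != 0) ->
  invmx (diagf w) = diagf (fun i => (w i)^-1).
Proof.
move=> hw.
have h : diagf w *m diagf (fun i => (w i)^-1) = 1%:M.
  by rewrite diagf_mul -diagf1; congr diagf; apply/funext => i; rewrite mulfV.
have [u _] := mulmx1_unit h.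
by rewrite -[invmx _]mulmx1 -h mulKmx.
Qed.

Lemma frob_lb d (rho s : 'I_d -> R) (A : 'M[R]_d) :
  (forall i, 0 <= rho i) -> (forall i, 0 <= s i) ->
  \sum_i rho i * (s i * A i i ^+ 2) <= frob_inner (diagf rho) (A *m diagf s *m A^T).
Proof.
move=> hr hs; rewrite /frob_inner diagf_tr /mxtrace; apply: ler_sum => i _.
rewrite /diagf mul_diag_mx mxE mxE; apply: ler_wpM2l => //.
rewrite mxE.
apply: (le_trans _ (term_le_sum (F := fun j => (A *m diag_mx (\row_i0 s i0)) i j * A^T j i) i _)).
  by rewrite mul_mx_diag !mxE expr2 le_eqVlt; apply/orP; left; apply/eqP; ring.
by move=> j; rewrite mul_mx_diag !mxE mulrAC -expr2; apply: mulr_ge0 => //; exact: sqr_ge0.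
Qed.

Lemma frob_diag d (rho s a : 'I_d -> R) :
  frob_inner (diagf rho) (diagf a *m diagf s *m (diagf a)^T)
  = \sum_i rho i * (s i * a i ^+ 2).
Proof.
rewrite /frob_inner !diagf_tr !diagf_mul /diagf mxtrace_diag.
by apply: eq_bigr => i _; rewrite mxE; ring.
Qed.

Lemma spec_lb d (rho : 'I_d -> R) (A : 'M[R]_d) j :
  (forall i, 0 <= rho i) ->
  rho j * (1 - A j j) ^+ 2 <= spec_norm ((1%:M - A)^T *m diagf rho *m (1%:M - A)).
Proof.
move=> hr; set B := (_ *m _ *m _).
apply: le_trans (spec_ge B (x := delta_mx j 0) _); last by rewrite vnorm_delta.
apply: le_trans (vnorm_coord _ j); rewrite -colE mxE.
apply: le_trans (ler_norm _).
rewrite /B /diagf mul_mx_diag mxE.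
apply: (le_trans _ (term_le_sum (F := fun k => (\matrix_(i, j1) ((1%:M - A)^T i j1 * (\row_i0 rho i0) 0 j1)) j k *
     (1%:M - A) k j) j _)).
  by rewrite /= !mxE eqxx mulr1n expr2 le_eqVlt; apply/orP; left; apply/eqP; ring.
by move=> k; rewrite !mxE mulrAC -expr2; apply: mulr_ge0 => //; exact: sqr_ge0.
Qed.

Lemma spec_diag_le d (b : 'I_d -> R) K : 0 <= K -> (forall i, `|b i| <= K) ->
  spec_norm (diagf b) <= K.
Proof.
move=> hK hb; apply: spec_le => x hx.
have e : vnorm (diagf b *m x) <= K * vnorm x.
  rewrite /vnorm -(ger0_norm hK) -sqrtr_sqr -sqrtrM ?sqr_ge0 // ler_sqrt; last first.
    by apply: mulr_ge0; [exact: sqr_ge0 | apply: sumr_ge0 => i _; exact: sqr_ge0].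
  rewrite mulr_sumr; apply: ler_sum => i _.
  rewrite /diagf mul_diag_mx !mxE exprMn; apply: ler_wpM2r; first exact: sqr_ge0.
  move: (hb i); rewrite ler_norml => /andP[h1 h2]; nra.
apply: le_trans e _; rewrite -[leRHS]mulr1; exact: ler_wpM2l.
Qed.

Lemma sum_le_cond d (P Q : 'I_d -> bool) (f g : 'I_d -> R) :
  (forall i, Q i -> P i /\ g i <= f i) -> (forall i, P i -> 0 <= f i) ->
  \sum_(i | Q i) g i <= \sum_(i | P i) f i.
Proof.
move=> h1 h2; rewrite [leLHS]big_mkcond [leRHS]big_mkcond; apply: ler_sum => i _.
case hQ: (Q i).
  by have [hP hle] := h1 i hQ; rewrite hP.
by case hP: (P i) => //; exact: h2.
Qed.
End Aux.

Unset Implicit Arguments. Set Strict Implicit.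
Theorem mainTheorem6 (R : realType) (d : nat)
  (lam m r : 'I_d -> R) (sigma : R) (n : nat)
  (hlam : forall i, 0 < lam i) (hm : forall i, 0 < m i)
  (hr : forall i, 0 <= r i) (hsigma : 0 < sigma) (hn : (1 <= n)%N) :
  let S := diagf lam in
  let M := diagf m in
  let Rm := diagf r in
  let Mih := diagf (fun i => (Num.sqrt (m i))^-1) in
  let R' := Mih *m Rm *m Mih in
  let S' := Mih *m S *m Mih in
  let lhs := inf [set (pi ^+ 2)^-1 * spec_norm ((1%:M - A)^T *m R' *m (1%:M - A))
                       + sigma ^+ 2 / n%:R * frob_inner R' (A *m invmx S' *m A^T)
                  | A in [set: 'M[R]_d]] in
  let mid := inf [set tau ^+ 2 / pi ^+ 2
                       + \sum_(i < d | r i / m i > tau ^+ 2)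
                           (1 - tau * Num.sqrt (m i / r i)) ^+ 2
                             * (sigma ^+ 2 * r i / (n%:R * lam i))
                  | tau in [set tau : R | 0 <= tau]] in
  let low := inf [set tau ^+ 2 / pi ^+ 2
                       + \sum_(i < d | r i / m i > tau ^+ 2)
                             sigma ^+ 2 * r i / (n%:R * lam i)
                  | tau in [set tau : R | 0 <= tau]] in
  lhs = mid /\ 4^-1 * low <= mid.
Proof.
move=> S M Rm Mih R' S' lhs mid low.
pose rho := fun i => r i / m i.
pose s := fun i => m i / lam i.
pose c := sigma ^+ 2 / n%:R.
have hmne : forall i, m i != 0 by move=> i; rewrite gt_eqF.
have hlne : forall i, lam i != 0 by move=> i; rewrite gt_eqF.
have hn0 : 0 < n%:R :> R by rewrite ltr0n.
have hnne : n%:R != 0 :> R by rewrite gt_eqF.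
have hrho : forall i, 0 <= rho i by move=> i; rewrite /rho divr_ge0 // ltW.
have hs : forall i, 0 <= s i by move=> i; rewrite /s divr_ge0 // ltW.
have hc : 0 <= c by rewrite /c divr_ge0 ?sqr_ge0 // ltW.
have hR' : R' = diagf rho by rewrite /R' conj_diag.
have hSi : invmx S' = diagf s.
  rewrite /S' /S conj_diag // inv_diagf.
    by congr diagf; apply/funext => i; rewrite /s invf_div.
  by move=> i; rewrite mulf_neq0 ?invr_neq0.
have hw : forall i, sigma ^+ 2 * r i / (n%:R * lam i) = c * (rho i * s i).
  move=> i; rewrite /c /rho /s; field.
  by rewrite hnne hlne hmne.
have hwge : forall i, 0 <= sigma ^+ 2 * r i / (n%:R * lam i).
  by move=> i; rewrite hw; apply: mulr_ge0 => //; apply: mulr_ge0.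
have hpi : 0 < pi ^+ 2 :> R by rewrite exprn_gt0 // pi_gt0.
pose cost := fun A : 'M[R]_d => (pi ^+ 2)^-1 * spec_norm ((1%:M - A)^T *m R' *m (1%:M - A))
                       + sigma ^+ 2 / n%:R * frob_inner R' (A *m invmx S' *m A^T).
pose fmid := fun tau : R => tau ^+ 2 / pi ^+ 2
                       + \sum_(i < d | r i / m i > tau ^+ 2)
                           (1 - tau * Num.sqrt (m i / r i)) ^+ 2
                             * (sigma ^+ 2 * r i / (n%:R * lam i)).
pose flow := fun tau : R => tau ^+ 2 / pi ^+ 2
                       + \sum_(i < d | r i / m i > tau ^+ 2)
                             sigma ^+ 2 * r i / (n%:R * lam i).
have lhsE : lhs = inf [set cost A | A in [set: 'M[R]_d]] by [].
have midE : mid = inf [set fmid tau | tau in [set tau : R | 0 <= tau]] by [].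
have lowE : low = inf [set flow tau | tau in [set tau : R | 0 <= tau]] by [].
have hcost0 : forall A, 0 <= cost A.
  move=> A; rewrite /cost hR' hSi; apply: addr_ge0.
    by apply: mulr_ge0; [rewrite invr_ge0 ltW | exact: spec_ge0].
  apply: mulr_ge0 => //; apply: le_trans (frob_lb A hrho hs).
  by apply: sumr_ge0 => i _; apply: mulr_ge0 => //; apply: mulr_ge0 => //; exact: sqr_ge0.
have hfmid0 : forall tau, 0 <= fmid tau.
  move=> tau; apply: addr_ge0; first by apply: divr_ge0; [exact: sqr_ge0 | exact: ltW].
  by apply: sumr_ge0 => i _; apply: mulr_ge0 => //; exact: sqr_ge0.
have hflow0 : forall tau, 0 <= flow tau.
  move=> tau; apply: addr_ge0; first by apply: divr_ge0; [exact: sqr_ge0 | exact: ltW].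
  by apply: sumr_ge0 => i _.
have key : forall (tau : R) i, 0 <= tau -> tau ^+ 2 < r i / m i ->
   [/\ 0 < r i, (tau * Num.sqrt (m i / r i)) ^+ 2 = tau ^+ 2 * (m i / r i),
       0 <= tau * Num.sqrt (m i / r i) & rho i * (m i / r i) = 1].
  move=> tau i ht hQ.
  have hrne : r i != 0.
    by apply/eqP => e; move: hQ; rewrite e mul0r ltNge sqr_ge0.
  have hr0 : 0 < r i by rewrite lt_neqAle eq_sym hrne hr.
  split => //.
  - by rewrite exprMn sqr_sqrtr // divr_ge0 // ltW.
  - by apply: mulr_ge0 => //; exact: sqrtr_ge0.
  - by rewrite /rho; field; rewrite hrne hmne.
have F3 : forall A, fmid (Num.sqrt (spec_norm ((1%:M - A)^T *m diagf rho *m (1%:M - A)))) <= cost A.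
  move=> A; rewrite /cost hR' hSi.
  set sp := spec_norm _.
  have hsp0 : 0 <= sp by exact: spec_ge0.
  set tau := Num.sqrt sp.
  have htau0 : 0 <= tau by exact: sqrtr_ge0.
  have htau2 : tau ^+ 2 = sp by rewrite sqr_sqrtr.
  rewrite /fmid htau2; apply: lerD; first by rewrite mulrC.
  apply: le_trans _ (ler_wpM2l hc (frob_lb A hrho hs)).
  rewrite mulr_sumr.
  apply: (sum_le_cond (P := fun _ => true)) => [i hQ|i _]; last first.
    by apply: mulr_ge0 => //; apply: mulr_ge0 => //; apply: mulr_ge0 => //; exact: sqr_ge0.
  split => //.
  rewrite -htau2 in hQ.
  have [hr0 hu2 hu0 he] := key tau i htau0 hQ.
  set u := tau * _ in hu2 hu0 *.
  have hspec : rho i * (1 - A i i) ^+ 2 <= tau ^+ 2 by rewrite htau2; exact: spec_lb.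
  have hle2 : (1 - A i i) ^+ 2 <= u ^+ 2.
    rewrite hu2 -[X in X <= _]mul1r -{1}he mulrAC.
    by apply: ler_wpM2r => //; apply: divr_ge0; apply: ltW.
  have hlt : u ^+ 2 < 1.
    by rewrite hu2 -he ltr_pM2r // divr_gt0.
  have h1 : 1 - A i i <= u by nra.
  have h2 : 0 <= 1 - u by nra.
  have h3 : (1 - u) ^+ 2 <= A i i ^+ 2 by nra.
  rewrite hw [X in _ <= X](_ : _ = A i i ^+ 2 * (c * (rho i * s i))); last by ring.
  apply: ler_wpM2r => //; apply: mulr_ge0 => //; exact: mulr_ge0.
have F2 : forall tau, 0 <= tau -> exists A, cost A <= fmid tau.
  move=> tau htau.
  pose a := fun i => if tau ^+ 2 < r i / m i then 1 - tau * Num.sqrt (m i / r i) else 0.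
  exists (diagf a); rewrite /cost /fmid hR' hSi frob_diag one_sub_diagf diagf_tr !diagf_mul.
  apply: lerD.
    rewrite mulrC; apply: ler_wpM2r; first by rewrite invr_ge0 ltW.
    apply: spec_diag_le => [|i]; first exact: sqr_ge0.
    rewrite /a; case: ifP => hQ.
      have [hr0 hu2 hu0 he] := key tau i htau hQ.
      rewrite (_ : 1 - _ = tau * Num.sqrt (m i / r i)); last by ring.
      rewrite mulrAC -expr2 hu2 -mulrA (mulrC (m i / r i)) he mulr1 ger0_norm //; exact: sqr_ge0.
    rewrite subr0 mulr1 mul1r ger0_norm //.
    by move/negbT: hQ; rewrite -leNgt.
  rewrite le_eqVlt; apply/orP; left; apply/eqP.
  rewrite mulr_sumr [RHS]big_mkcond; apply: eq_bigr => i _.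
  rewrite /a; case: ifP => _; last by rewrite expr0n /= !mulr0.
  rewrite hw /c; set z := (1 - _) ^+ 2; ring.
have hpine : pi ^+ 2 != 0 :> R by rewrite gt_eqF.
have F4 : forall tau, 0 <= tau -> 4^-1 * flow (2 * tau) <= fmid tau.
  move=> tau htau; rewrite /flow /fmid mulrDr; apply: lerD.
    have e : forall x : R, 4^-1 * ((2 * tau) ^+ 2 * x) = tau ^+ 2 * x by move=> x; field.
    by rewrite e.
  rewrite mulr_sumr.
  apply: sum_le_cond => [i hQ|i hP]; last first.
    by apply: mulr_ge0 => //; exact: sqr_ge0.
  have hP : tau ^+ 2 < r i / m i.
    by apply: le_lt_trans hQ; nra.
  split => //.
  have [hr0 hu2 hu0 he] := key tau i htau hP.
  set u := tau * _ in hu2 hu0 *.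
  have hlt : 4 * u ^+ 2 < 1.
    have hlt0 : (2 * tau) ^+ 2 * (m i / r i) < rho i * (m i / r i).
      by rewrite ltr_pM2r // divr_gt0.
    rewrite he in hlt0; nra.
  have h4 : 1 <= 4 * (1 - u) ^+ 2 by nra.
  apply: ler_wpM2r; first exact: hwge.
  have : 4^-1 * 1 <= 4^-1 * (4 * (1 - u) ^+ 2) :> R.
    by apply: ler_wpM2l => //; rewrite invr_ge0.
  by rewrite mulr1 mulrA mulVf ?mul1r.
have lhs_lb : has_lbound [set cost A | A in [set: 'M[R]_d]].
  by exists 0 => _ [A _ <-].
have mid_lb : has_lbound [set fmid tau | tau in [set tau : R | 0 <= tau]].
  by exists 0 => _ [t _ <-].
have low_lb : has_lbound [set flow tau | tau in [set tau : R | 0 <= tau]].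
  by exists 0 => _ [t _ <-].
have mid_ne : [set fmid tau | tau in [set tau : R | 0 <= tau]] !=set0.
  by exists (fmid 0); apply: imageP; rewrite /=.
have lhs_ne : [set cost A | A in [set: 'M[R]_d]] !=set0.
  by exists (cost 0); apply: imageP.
rewrite lhsE midE lowE; split.
  apply/le_anti/andP; split.
    apply: lb_le_inf => // _ [tau htau <-].
    have [A hA] := F2 tau htau; apply: le_trans hA.
    by apply: (ge_inf lhs_lb); exists A.
  apply: lb_le_inf => // _ [A _ <-].
  apply: le_trans (F3 A).
  by apply: (ge_inf mid_lb); exists (Num.sqrt (spec_norm ((1%:M - A)^T *m diagf rho *m (1%:M - A)))) => //; exact: sqrtr_ge0.
apply: lb_le_inf => // _ [tau htau <-].
apply: le_trans (F4 tau htau).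
apply: ler_wpM2l; first by rewrite invr_ge0.
by apply: (ge_inf low_lb); exists (2 * tau) => //; apply: mulr_ge0.
Qed.
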